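(* Let $X=(X_0,X_1,\dots)$ be a Markov chain on $[0,\infty)$ with transition kernel $T(\cdot\mid x)$ such that $\int_0^\infty|y-x|^3T(dy\mid x)<\infty$ for all $x\ge0$, and let $\mu_k(x)=\int_0^\infty(y-x)^kT(dy\mid x)$ for $k=1,2,3$. Assume $\mu_2(x)>0$ for all sufficiently large $x$. Assume there is a function $\psi_1$ such that for all sufficiently large $x$, $\mu_1(x)\le\frac{\mu_2(x)}{2x}[1+\psi_1(x)]$, and $\lim_{x\to\infty}(\log x)\psi_1(x)=0$. Assume also $\lim_{x\to\infty}\frac{\log x}{x}\frac{\mu_3(x)}{\mu_2(x)}=0$. Then the function $f_0(x)=\log(\log(e+x))$, $x\ge0$, is superharmonic on $[m,\infty)$ for all $m$ large enough, i.e. there is $m$ such that $\int_0^\infty f_0(y)T(dy\mid x)\le f_0(x)$ for all $x\ge m$. *)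

(* Defs.v *)
From HB Require Import structures.
From mathcomp Require Import all_boot all_order all_algebra.
From mathcomp Require Import all_classical all_reals all_analysis.
Set Implicit Arguments. Unset Strict Implicit. Unset Printing Implicit Defensive.
Import Order.TTheory GRing.Theory Num.Theory.
Import numFieldNormedType.Exports.
Local Open Scope classical_set_scope.
Local Open Scope ring_scope.

(* k-th moment of the one-step increment from x:
   mu_k(x) = \int_0^oo (y - x)^k T(dy | x)   (real-valued via fine; it is
   finite under the third-moment hypothesis of the theorem). *)
Definition moment (R : realType) (T : R.-pker R ~> R) (k : nat) (x : R) : R :=
  fine (\int[T x]_(y in `[0%R, +oo[%classic) ((y - x) ^+ k)%:E)%E.

Definition f0 (R : realType) (x : R) : R := ln (ln (expR 1 + x)).

(* Main.v *)
Require Import Defs.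
From HB Require Import structures.
From mathcomp Require Import all_boot all_order all_algebra.
From mathcomp Require Import all_classical all_reals all_analysis.
From mathcomp Require Import ring lra measurable_realfun.
Import Order.TTheory GRing.Theory Num.Theory.
Import numFieldNormedType.Exports.
Local Open Scope classical_set_scope.
Local Open Scope ring_scope.

Section S.
Variable R : realType.
Let E : R := expR 1.
Lemma E_ge2 : 2 <= E.
Proof. by have := expR_ge1Dx (1:R); rewrite /E. Qed.

Lemma dLL {y : R} : 0 < E + y -> is_derive y 1 (fun z => ln (E + z)) (E + y)^-1.
Proof.
move=> hp.
have h1 : is_derive y 1 (fun z => E + z) 1.
  have := is_deriveD (is_derive_cst E y 1) (is_derive_id y 1).
  by rewrite add0r.
have h2 := is_derive1_ln hp.
have := is_derive1_comp h2 h1.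
by rewrite mulr1.
Qed.

Lemma scE (a b : R) : a *: b = a * b. Proof. by []. Qed.

Definition F0 (z : R) := ln (ln (E + z)).
Definition F1 (z : R) := ((E + z) * ln (E + z))^-1.
Definition F2 (z : R) := - (ln (E + z) + 1) * (F1 z) ^+ 2.
Definition F3 (z : R) := (2 * ln (E + z) ^+ 2 + 3 * ln (E + z) + 2) * (F1 z) ^+ 3.

Lemma dU (y : R) : is_derive y 1 (fun z => E + z) 1.
Proof. by have := is_deriveD (is_derive_cst E y 1) (is_derive_id y 1); rewrite add0r. Qed.

Lemma L_gt0 {y : R} : 0 <= y -> 0 < ln (E + y).
Proof. move=> y0; apply: ln_gt0; have := E_ge2; lra. Qed.
Lemma L_ge1 {y : R} : 0 <= y -> 1 <= ln (E + y).
Proof.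
move=> y0; have e0 : 0 < E by rewrite /E expR_gt0.
have : ln E <= ln (E + y) by rewrite ler_ln ?posrE //; lra.
by rewrite /E expRK.
Qed.

Lemma U_gt0 {y : R} : 0 <= y -> 0 < E + y.
Proof. move=> y0; have := E_ge2; lra. Qed.

Lemma dF0 (y : R) : 0 <= y -> is_derive y 1 F0 (F1 y).
Proof.
move=> y0.
have hL := dLL (U_gt0 y0).
have h2 := is_derive1_ln (L_gt0 y0).
have := is_derive1_comp (g := fun z => ln (E + z)) (x := y) h2 hL.
rewrite /F1 invfM mulrC. by [].
Qed.

Lemma dF1 (y : R) : 0 <= y -> is_derive y 1 F1 (F2 y).
Proof.
move=> y0.
have hL := dLL (U_gt0 y0).
have hM := is_deriveM (dU y) hL.
have nz : ((fun z => E + z) * (fun z => ln (E + z))) y != 0.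
  by rewrite /= mulf_neq0 // gt_eqF // ?U_gt0 ?L_gt0.
have := is_deriveV nz hM.
rewrite /F2 /F1 /= !scE => h.
apply: is_derive_eq h _.
have := U_gt0 y0; have := L_gt0 y0.
move=> a b.
rewrite (_ : ([eta +%R E] * (fun z : R => ln (E + z))) y = (E + y) * ln (E + y)) //.
field. by rewrite !gt_eqF.
Qed.

Lemma dF2 (y : R) : 0 <= y -> is_derive y 1 F2 (F3 y).
Proof.
move=> y0.
have hL := dLL (U_gt0 y0).
have hA := is_deriveN (is_deriveD hL (is_derive_cst (1:R) y 1)).
have hB := is_deriveX 2 (dF1 _ y0).
have hM := is_deriveM hA hB.
apply: is_derive_eq hM _.
rewrite /F3 /F2 /F1 /= !scE.
have := U_gt0 y0; have := L_gt0 y0.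
move=> a b.
rewrite !fctE /=.
field. by rewrite !gt_eqF.
Qed.

Lemma mono_d {g d : R -> R} {a b : R} : 0 <= a -> a <= b ->
  (forall z : R, 0 <= z -> is_derive z 1 g (d z)) ->
  (forall z : R, a <= z <= b -> 0 <= d z) -> g a <= g b.
Proof.
move=> a0 ab hd hs.
have hd' : forall x, x \in `]a, b[%R -> is_derive x 1 g (d x).
  move=> x; rewrite in_itv /= => /andP[ax _]; apply: hd; lra.
have hc : {within `[a, b], continuous g}.
  apply: continuous_in_subspaceT => x.
  rewrite inE /= in_itv /= => /andP[ax _].
  have [hdx _] := hd x ltac:(lra).
  exact/differentiable_continuous/derivable1_diffP.
have [c + eq] := MVT_segment ab hd' hc.
rewrite in_itv /= => /andP[ac cb].
have := hs c ltac:(lra).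
move=> dc; rewrite -subr_ge0 eq; apply: mulr_ge0 => //; lra.
Qed.

Lemma dcubic (x c0 c1 c2 c3 y : R) :
  is_derive y 1 (fun z => c0 + c1 * (z - x) + c2 * (z - x) ^+ 2 + c3 * (z - x) ^+ 3)
    (c1 + 2 * c2 * (y - x) + 3 * c3 * (y - x) ^+ 2).
Proof.
have ht : is_derive y 1 (fun z : R => z - x) 1.
  by have := is_deriveB (is_derive_id y (1:R)) (is_derive_cst x y 1); rewrite subr0.
have h := is_deriveD (is_deriveD (is_deriveD (is_derive_cst c0 y 1)
   (is_deriveM (is_derive_cst c1 y 1) ht))
   (is_deriveM (is_derive_cst c2 y 1) (is_deriveX 2 ht)))
   (is_deriveM (is_derive_cst c3 y 1) (is_deriveX 3 ht)).
apply: is_derive_eq h _.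
rewrite /= !scE !fctE /=. ring.
Qed.

Lemma d_sub {p F dp dF : R -> R} :
  (forall z : R, 0 <= z -> is_derive z 1 p (dp z)) ->
  (forall z : R, 0 <= z -> is_derive z 1 F (dF z)) ->
  forall z : R, 0 <= z -> is_derive z 1 (fun w => p w - F w) (dp z - dF z).
Proof. by move=> hp hF z z0; have := is_deriveB (hp z z0) (hF z z0). Qed.

Lemma step_min {p F dp dF : R -> R} (x : R) : 0 <= x ->
  (forall z : R, 0 <= z -> is_derive z 1 p (dp z)) ->
  (forall z : R, 0 <= z -> is_derive z 1 F (dF z)) ->
  p x = F x ->
  (forall z : R, 0 <= z <= x -> dp z - dF z <= 0) ->
  (forall z : R, x <= z -> 0 <= dp z - dF z) ->
  forall y : R, 0 <= y -> F y <= p y.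
Proof.
move=> x0 hp hF e hl hr y y0.
have hd := d_sub hp hF.
case: (leP x y) => xy.
  have := mono_d x0 xy hd (fun z hz => hr z ltac:(lra)).
  rewrite e subrr; lra.
have hd' : forall z : R, 0 <= z -> is_derive z 1 (fun w => - (p w - F w)) (- (dp z - dF z)).
  by move=> z z0; have := is_deriveN (hd z z0).
have := mono_d y0 (ltW xy) hd' (fun z hz => ltac:(have := hl z ltac:(lra); lra)).
rewrite e subrr; lra.
Qed.

Lemma step_mono {p F dp dF : R -> R} (x : R) : 0 <= x ->
  (forall z : R, 0 <= z -> is_derive z 1 p (dp z)) ->
  (forall z : R, 0 <= z -> is_derive z 1 F (dF z)) ->
  p x = F x ->
  (forall z : R, 0 <= z -> 0 <= dp z - dF z) ->
  forall y : R, 0 <= y -> (x <= y -> F y <= p y) /\ (y <= x -> p y <= F y).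
Proof.
move=> x0 hp hF e hs y y0.
have hd := d_sub hp hF.
split => xy.
  have := mono_d x0 xy hd (fun z hz => hs z ltac:(lra)).
  rewrite e subrr; lra.
have := mono_d y0 xy hd (fun z hz => hs z ltac:(lra)).
rewrite e subrr; lra.
Qed.

Lemma F3E {z : R} : 0 <= z ->
  F3 z = (2 * (ln (E + z))^-1 + 3 * (ln (E + z))^-1 ^+ 2 + 2 * (ln (E + z))^-1 ^+ 3)
         * (E + z)^-1 ^+ 3.
Proof.
move=> z0; have := U_gt0 z0; have := L_gt0 z0; move=> a b.
rewrite /F3 /F1; field; by rewrite !gt_eqF.
Qed.

Lemma F3_dec {a b : R} : 0 <= a -> a <= b -> F3 b <= F3 a.
Proof.
move=> a0 ab.
have b0 : 0 <= b by lra.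
rewrite (F3E a0) (F3E b0).
have ua := U_gt0 a0; have ub := U_gt0 b0.
have La := L_gt0 a0; have Lb := L_gt0 b0.
have hL : ln (E + a) <= ln (E + b).
  by rewrite ler_ln ?posrE //; lra.
have hq : (ln (E + b))^-1 <= (ln (E + a))^-1.
  by rewrite lef_pV2 ?posrE.
have hv : (E + b)^-1 <= (E + a)^-1.
  by rewrite lef_pV2 ?posrE //; lra.
set qa := (ln (E + a))^-1 in hq *; set qb := (ln (E + b))^-1 in hq *.
set va := (E + a)^-1 in hv *; set vb := (E + b)^-1 in hv *.
have qb0 : 0 <= qb by rewrite invr_ge0 ltW.
have vb0 : 0 <= vb by rewrite invr_ge0 ltW.
have hq2 : qb ^+ 2 <= qa ^+ 2 by apply: lerXn2r; rewrite ?nnegrE //; lra.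
have hq3 : qb ^+ 3 <= qa ^+ 3 by apply: lerXn2r; rewrite ?nnegrE //; lra.
have hv3 : vb ^+ 3 <= va ^+ 3 by apply: lerXn2r; rewrite ?nnegrE //; lra.
apply: ler_pM => //.
- have := exprn_ge0 2 qb0; have := exprn_ge0 3 qb0; lra.
- by rewrite exprn_ge0.
- lra.
Qed.

Lemma taylor (x y : R) : 0 <= x -> 0 <= y ->
  F0 y <= F0 x + F1 x * (y - x) + (F2 x / 2) * (y - x) ^+ 2 + (F3 x / 6) * (y - x) ^+ 3.
Proof.
move=> x0 y0.
have H2 : forall z : R, 0 <= z -> F2 z <= F2 x + F3 x * (z - x) + 0 * (z - x) ^+ 2 + 0 * (z - x) ^+ 3.
  move=> w w0; apply: (step_min (p := fun z => F2 x + F3 x * (z - x) + 0 * (z - x) ^+ 2 + 0 * (z - x) ^+ 3) (F := F2) (dp := fun z => F3 x + 2 * 0 * (z - x) + 3 * 0 * (z - x) ^+ 2) (dF := F3) x x0 _ _ _ _ _ w w0).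
  - by move=> z _; apply: dcubic.
  - by move=> z z0; apply: dF2.
  - by rewrite subrr; ring.
  - move=> z /andP[z0 zx]; have := F3_dec z0 zx; lra.
  - move=> z xz; have := F3_dec x0 xz; lra.
have H1 : forall z : R, 0 <= z ->
    (x <= z -> F1 z <= F1 x + F2 x * (z - x) + (F3 x / 2) * (z - x) ^+ 2 + 0 * (z - x) ^+ 3) /\
    (z <= x -> F1 x + F2 x * (z - x) + (F3 x / 2) * (z - x) ^+ 2 + 0 * (z - x) ^+ 3 <= F1 z).
  apply: (step_mono (p := fun z => F1 x + F2 x * (z - x) + (F3 x / 2) * (z - x) ^+ 2 + 0 * (z - x) ^+ 3) (F := F1) (dp := fun z => F2 x + 2 * (F3 x / 2) * (z - x) + 3 * 0 * (z - x) ^+ 2) (dF := F2) x x0).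
  - by move=> z _; apply: dcubic.
  - by move=> z z0; apply: dF1.
  - by rewrite subrr; field.
  - move=> z z0; have := H2 z z0.
    have -> : F2 x + 2 * (F3 x / 2) * (z - x) + 3 * 0 * (z - x) ^+ 2 =
              F2 x + F3 x * (z - x) + 0 * (z - x) ^+ 2 + 0 * (z - x) ^+ 3 by field.
    lra.
have := (step_min (p := fun z => F0 x + F1 x * (z - x) + (F2 x / 2) * (z - x) ^+ 2 + (F3 x / 6) * (z - x) ^+ 3)
  (dp := fun z => F1 x + 2 * (F2 x / 2) * (z - x) + 3 * (F3 x / 6) * (z - x) ^+ 2) (dF := F1) (F := F0) x x0).
apply => //.
- by move=> z _; apply: dcubic.
- by move=> z z0; apply: dF0.
- by rewrite subrr; field.
- move=> z /andP[z0 zx]; have [_ h] := H1 z z0; have := h zx.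
  have -> : F1 x + 2 * (F2 x / 2) * (z - x) + 3 * (F3 x / 6) * (z - x) ^+ 2 =
            F1 x + F2 x * (z - x) + (F3 x / 2) * (z - x) ^+ 2 + 0 * (z - x) ^+ 3 by field.
  lra.
- move=> z xz; have [h _] := H1 z ltac:(lra); have := h xz.
  have -> : F1 x + 2 * (F2 x / 2) * (z - x) + 3 * (F3 x / 6) * (z - x) ^+ 2 =
            F1 x + F2 x * (z - x) + (F3 x / 2) * (z - x) ^+ 2 + 0 * (z - x) ^+ 3 by field.
  lra.
Qed.
End S.

Section Int.
Variable R : realType.
Variables (mu : {measure set R -> \bar R}) (x : R).
Let D := `[0%R, +oo[%classic : set R.
Hypothesis muD : mu D = 1%E.
Hypothesis h3 : (\int[mu]_(y in D) (`|y - x| ^+ 3)%:E < +oo)%E.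

Let mD : measurable D. Proof. exact: measurable_itv. Qed.

Lemma Dge0 y : D y -> 0 <= y.
Proof. by rewrite /D /= in_itv /= andbT. Qed.

Lemma int_cst (k : R) : mu.-integrable D (fun _ => k%:E).
Proof.
apply/integrableP; split; first exact: measurable_cst.
rewrite integral_cst // muD mule1; exact: ltry.
Qed.

Lemma mpoly (k : nat) : measurable_fun D (fun y : R => (y - x) ^+ k).
Proof.
apply: measurable_funX; apply: measurable_funB => //; exact: measurable_cst.
Qed.

Lemma int3 : mu.-integrable D (fun y => (`|y - x| ^+ 3)%:E).
Proof.
apply/integrableP; split.
  apply/measurable_EFinP; apply: measurable_funX.
  apply: measurableT_comp => //; apply: measurable_funB => //; exact: measurable_cst.
under eq_integral do rewrite gee0_abs ?lee_fin ?exprn_ge0 //.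
exact: h3.
Qed.

Lemma int_pow (k : nat) : (k <= 3)%N -> mu.-integrable D (fun y => ((y - x) ^+ k)%:E).
Proof.
move=> k3.
have hg : mu.-integrable D (fun y => (1 + `|y - x| ^+ 3)%:E).
  apply: (eq_integrable mD) (integrableD mD (int_cst 1) int3) => y _ /=.
  by rewrite EFinD.
apply: (le_integrable mD) hg.
  by apply/measurable_EFinP; apply: mpoly.
move=> y _; rewrite !abse_EFin lee_fin.
rewrite (ger0_norm (x := 1 + _)); last by have := exprn_ge0 3 (normr_ge0 (y - x)); lra.
rewrite normrX.
set a := `|y - x|.
have a0 : 0 <= a by exact: normr_ge0.
case: (leP a 1) => a1.
  have : a ^+ k <= 1 by rewrite exprn_ile1.
  have := exprn_ge0 3 a0; lra.
have : a ^+ k <= a ^+ 3 by rewrite ler_eXn2l // ltW.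
have := exprn_ge0 3 a0; lra.
Qed.

Definition mom k := fine (\int[mu]_(y in D) ((y - x) ^+ k)%:E)%E.

Lemma momE k : (k <= 3)%N -> (\int[mu]_(y in D) ((y - x) ^+ k)%:E)%E = (mom k)%:E.
Proof. by move=> k3; rewrite fineK // integrable_fin_num // int_pow. Qed.

Lemma int_bound (f : R -> R) (c0 c1 c2 c3 : R) :
  measurable_fun D f -> (forall y, 0 <= y -> 0 <= f y) ->
  (forall y, 0 <= y -> f y <= c0 + c1 * (y - x) ^+ 1 + c2 * (y - x) ^+ 2 + c3 * (y - x) ^+ 3) ->
  (\int[mu]_(y in D) (f y)%:E <= (c0 + c1 * mom 1 + c2 * mom 2 + c3 * mom 3)%:E)%E.
Proof.
move=> mf f0 fle.
apply: (le_trans (ge0_le_integral mu mD (f2 := fun y => (c0 + c1 * (y - x) ^+ 1 + c2 * (y - x) ^+ 2 + c3 * (y - x) ^+ 3)%:E) _ _ _ _)).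
- by move=> y Dy; rewrite lee_fin f0 // Dge0.
- by apply/measurable_EFinP.
- apply/measurable_EFinP.
  apply: measurable_funD; [apply: measurable_funD; [apply: measurable_funD|]|].
  + exact: measurable_cst.
  + by apply: measurable_funM; [exact: measurable_cst | exact: mpoly].
  + by apply: measurable_funM; [exact: measurable_cst | exact: mpoly].
  + by apply: measurable_funM; [exact: measurable_cst | exact: mpoly].
- by move=> y Dy; rewrite lee_fin; apply: fle; exact: Dge0.
have i1 := integrableZl mD c1 (@int_pow 1 isT).
have i2 := integrableZl mD c2 (@int_pow 2 isT).
have i3 := integrableZl mD c3 (@int_pow 3 isT).
have i0 := int_cst c0.
rewrite (eq_integral (fun y : R => ((c0%:E + c1%:E * ((y - x) ^+ 1)%:E) + c2%:E * ((y - x) ^+ 2)%:E) + c3%:E * ((y - x) ^+ 3)%:E)%E); last first.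
  by move=> y _; rewrite -!EFinM -!EFinD.
rewrite integralD //; last first.
  by apply: integrableD => //; apply: integrableD.
rewrite integralD //; last by apply: integrableD.
rewrite integralD //.
rewrite !integralZl // ?int_pow // !momE //.
rewrite integral_cst // muD mule1 -!EFinM -!EFinD.
by [].
Qed.
End Int.

Section Fin.
Variable R : realType.

Lemma final_ineq (x E L l psi r m1 m2 m3 : R) :
  0 < x -> 0 <= E -> 1 <= L -> L <= 2 * l -> 0 < l -> E + x <= 2 * x ->
  E * L <= x / 4 -> l * psi <= 1/20 -> l * `|r| <= x / 20 ->
  0 < m2 -> m1 <= m2 / (2 * x) * (1 + psi) -> m3 = r * m2 ->
  ((E + x) * L)^-1 * m1 + (- (L + 1) * ((E + x) * L)^-1 ^+ 2) / 2 * m2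
   + ((2 * L ^+ 2 + 3 * L + 2) * ((E + x) * L)^-1 ^+ 3) / 6 * m3 <= 0.
Proof.
move=> x0 E0 L1 Ll l0 ux EL hpsi hr m20 hm1 hm3.
set u := E + x in ux *.
have u0 : 0 < u by rewrite /u; lra.
have L0 : 0 < L by lra.
set w := (u * L)^-1.
have w0 : 0 < w by rewrite invr_gt0 mulr_gt0.
have hw : w * (u * L) = 1 by rewrite mulVf // gt_eqF // mulr_gt0.
have a0 : 0 <= u * L / x by rewrite divr_ge0 ?mulr_ge0 ?ltW.
have a4 : u * L / x <= 4 * l.
  rewrite ler_pdivrMr //.
  have : u * L <= (2 * x) * (2 * l) by apply: ler_pM; lra.
  move=> h; apply: (le_trans h); rewrite mulrA (mulrC 2 x) -!mulrA; lra.
have t2 : psi * (u * L / x) <= 1/5.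
  case: (leP psi 0) => hp.
    have : psi * (u * L / x) <= 0 by rewrite mulr_le0_ge0.
    lra.
  have : psi * (u * L / x) <= psi * (4 * l) by rewrite ler_pM2l.
  nra.
have b0 : 0 <= `|r| := normr_ge0 r.
have t3 : (2 * L ^+ 2 + 3 * L + 2) * r / (3 * u * L) <= 7/30.
  have h1 : (2 * L ^+ 2 + 3 * L + 2) * r / (3 * u * L) <= (2 * L ^+ 2 + 3 * L + 2) * `|r| / (3 * u * L).
    have P0 : 0 < 2 * L ^+ 2 + 3 * L + 2.
      have := exprn_ge0 2 (ltW L0); lra.
    have Q0 : 0 < 3 * u * L by rewrite !mulr_gt0 //.
    by rewrite ler_pM2r ?invr_gt0 // ler_pM2l // ler_norm.
  apply: (le_trans h1).
  rewrite ler_pdivrMr; last by rewrite !mulr_gt0.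
  have h2 : (2 * L ^+ 2 + 3 * L + 2) <= 7 * L ^+ 2.
    have hh : 0 <= (L - 1) * (5 * L + 2) by apply: mulr_ge0; lra.
    rewrite expr2; lra.
  have h3 : (2 * L ^+ 2 + 3 * L + 2) * `|r| <= 7 * L ^+ 2 * `|r| by apply: ler_wpM2r.
  have h4 : L * `|r| <= 2 * l * `|r| by rewrite ler_wpM2r.
  have h45 : L * `|r| <= x / 10 by lra.
  have h5 : 7 * L ^+ 2 * `|r| <= 7 * L * (x / 10).
    rewrite expr2 -mulrA -mulrA mulrA; apply: ler_wpM2l => //; lra.
  have h6 : x <= u by rewrite /u; lra.
  nra.
have t1 : u * L / x - L - 1 = E * L / x - 1.
  rewrite /u; field; lra.
have EL' : E * L / x <= 1/4 by rewrite ler_pdivrMr //; lra.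
have Q : u * L * (1 + psi) / x - (L + 1) + (2 * L ^+ 2 + 3 * L + 2) * r / (3 * u * L) <= 0.
  have -> : u * L * (1 + psi) / x = u * L / x + psi * (u * L / x) by field; lra.
  lra.
rewrite hm3.
have e1 : w * m1 <= w * (m2 / (2 * x) * (1 + psi)) by rewrite ler_pM2l.
have e2 : w * (m2 / (2 * x) * (1 + psi)) + - (L + 1) * w ^+ 2 / 2 * m2 +
          (2 * L ^+ 2 + 3 * L + 2) * w ^+ 3 / 6 * (r * m2)
   = m2 * (w ^+ 2 / 2) * (u * L * (1 + psi) / x - (L + 1) + (2 * L ^+ 2 + 3 * L + 2) * r / (3 * u * L)).
  rewrite /w; field; rewrite ?gt_eqF //; lra.
have : m2 * (w ^+ 2 / 2) * (u * L * (1 + psi) / x - (L + 1) + (2 * L ^+ 2 + 3 * L + 2) * r / (3 * u * L)) <= 0.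
  have k0 : 0 <= m2 * (w ^+ 2 / 2).
    apply: mulr_ge0; first lra.
    apply: divr_ge0; last lra.
    apply: exprn_ge0; lra.
  exact: mulr_ge0_le0 k0 Q.
lra.
Qed.
End Fin.

Lemma near_all (R : realType) (Q : R -> Prop) :
  (\forall x \near +oo, Q x) -> \forall m \near +oo, forall x : R, m <= x -> Q x.
Proof.
move=> [M [Mr HM]]; exists M; split => // m Mm x mx; apply: HM.
exact: lt_le_trans Mm mx.
Qed.

Lemma muD1 (R : realType) (T : R.-pker R ~> R) (x : R) :
  T x `]-oo, 0%R[%classic = 0%E -> T x `[0%R, +oo[%classic = 1%E.
Proof.
move=> h0.
have hU : `]-oo, 0%R[%classic `|` `[0%R, +oo[%classic = [set: R].
  apply/seteqP; split => y //= _.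
  by case: (ltP y 0) => h; [left|right]; rewrite /= in_itv /= ?h ?andbT.
have hI : `]-oo, 0%R[%classic `&` `[0%R, +oo[%classic = set0 :> set R.
  apply/seteqP; split => y //= [] /=; rewrite !in_itv /= andbT => a b.
  by have := lt_le_trans a b; rewrite ltxx.
have := @prob_kernel _ _ _ _ _ T x; rewrite -hU measureU //.
  move=> <-.
  by rewrite [X in _ = X + _](_ : _ = 0%E) ?add0e //.
all: try exact: measurable_itv.
Qed.

Theorem theorem4p4 (R : realType) (T : R.-pker R ~> R) (psi1 : R -> R)
  (Hstate : forall x : R, 0 <= x -> T x `]-oo, 0%R[%classic = 0%E)
  (H3 : forall x : R, 0 <= x ->
     (\int[T x]_(y in `[0%R, +oo[%classic) (`|y - x| ^+ 3)%:E < +oo)%E)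
  (Hmu2 : \forall x \near +oo, 0 < moment T 2 x)
  (Hmu1 : \forall x \near +oo,
     moment T 1 x <= moment T 2 x / (2 * x) * (1 + psi1 x))
  (Hpsi1 : (fun x => ln x * psi1 x) @ +oo --> (0 : R))
  (Hmu3 : (fun x => ln x / x * (moment T 3 x / moment T 2 x)) @ +oo --> (0 : R)) :
  \forall m \near +oo, forall x : R, m <= x ->
    (\int[T x]_(y in `[0%R, +oo[%classic) (f0 y)%:E <= (f0 x)%:E)%E.
Proof.
apply: near_all.
set E : R := expR 1.
have E2 : 2 <= E by have := expR_ge1Dx (1:R); rewrite /E.
have eps0 : (0 : R) < 1/20 by lra.

near=> x.
have xbig : 256 * E ^+ 2 + 3 < x.
  by near: x; apply: nbhs_pinfty_gt; rewrite num_real.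
have hm2 : 0 < moment T 2 x by near: x; exact: Hmu2.
have hm1 : moment T 1 x <= moment T 2 x / (2 * x) * (1 + psi1 x) by near: x; exact: Hmu1.
have hp : `|ln x * psi1 x| <= 1/20 by near: x; exact: (cvgr0_norm_le _ Hpsi1 _ eps0).
have hr : `|ln x / x * (moment T 3 x / moment T 2 x)| <= 1/20 by near: x; exact: (cvgr0_norm_le _ Hmu3 _ eps0).
have E2sq : 0 <= E ^+ 2 by rewrite exprn_ge0 //; lra.
have x0 : 0 < x by lra.
have xE : E <= x.
  have : E <= E ^+ 2 by rewrite expr2; nra.
  move=> h; lra.
have muD := @muD1 R T x (Hstate x (ltW x0)).
have := @int_bound R (T x) x muD (H3 x (ltW x0)) (fun y => f0 y) (f0 x) (@F1 R x) (@F2 R x / 2) (@F3 R x / 6).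
move=> H; apply: le_trans (H _ _ _) _.
- rewrite /f0; apply: measurableT_comp; first exact: measurable_ln.
  apply: measurableT_comp; first exact: measurable_ln.
  apply: measurable_funD; first exact: measurable_cst.
  exact: measurable_id.
- by move=> y y0; rewrite /f0; apply: ln_ge0; apply: L_ge1.
- move=> y y0; rewrite expr1; exact (@taylor R x y (ltW x0) y0).
rewrite lee_fin.

rewrite -[X in _ <= X]addr0 -!addrA lerD2l !addrA.
set l := ln x.
set L := ln (E + x).
have l0 : 0 < l by apply: ln_gt0; lra.
have L1 : 1 <= L by apply: L_ge1; lra.
have Ll : L <= 2 * l.
  rewrite /l mulr_natl -lnXn // /L ler_ln ?posrE ?exprn_gt0 //; last by lra.
  rewrite expr2; nra.
set s := Num.sqrt x.
have s0 : 0 < s by rewrite sqrtr_gt0.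
have ss : s * s = x by rewrite -expr2 sqr_sqrtr // ltW.
have ls : l < 2 * s.
  rewrite /l -ss lnM ?posrE //.
  have := ln_sublinear s0; lra.
have s16 : 16 * E <= s.
  case: (leP (16 * E) s) => // h.
  have : s * s < (16 * E) * (16 * E) by apply: ltr_pM; lra.
  rewrite ss; move=> h'; exfalso; move: xbig; rewrite expr2; lra.
have EL : E * L <= x / 4.
  have h1 : E * L <= E * (2 * l) by apply: ler_wpM2l; lra.
  have h2 : E * (2 * l) <= E * (4 * s) by apply: ler_wpM2l; lra.
  have h3 : E * (4 * s) <= s * s / 4.
    have : 4 * E * s <= s * s / 4.
      have : (16 * E) * s <= s * s by apply: ler_wpM2r; lra.
      lra.
    lra.
  rewrite -ss; lra.
have hpsi : l * psi1 x <= 1/20 by apply: le_trans (ler_norm _) hp.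
set m1 := moment T 1 x in hm1 *.
set m2 := moment T 2 x in hm1 hm2 hr *.
set m3 := moment T 3 x in hr *.
have hrr : l * `|m3 / m2| <= x / 20.
  move: hr; rewrite normrM (ger0_norm (x := l / x)); last by rewrite divr_ge0 // ltW.
  rewrite -mulrA (mulrC (x^-1)) mulrA ler_pdivrMr //.
  lra.
have hux : E + x <= 2 * x by lra.
have h3e : m3 = m3 / m2 * m2 by rewrite divfK // gt_eqF.
have := @final_ineq R x E L l (psi1 x) (m3 / m2) m1 m2 m3 x0 (ltW (expR_gt0 1)) L1 Ll l0 hux EL hpsi hrr hm2 hm1 h3e.
move=> h; exact h.
Unshelve. all: by end_near.
Qed.
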